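(* Let $G=(V,E,d)$ be as in the context and suppose that $\alpha=\{1,\dots,k\}\subseteq V$ is a clique in $G$ (every pair $i<j$ in $\alpha$ satisfies $ij\in E$). Define $$\widehat\Omega:=\{X\in\mathcal{S}^n_{c,+}:\ \mathcal{K}(X)_{ij}=d_{ij}\ \text{ for all }1\le i<j\le k\},$$ and assume $\widehat\Omega\neq\emptyset$. Let $d_\alpha\in\mathcal{S}^k$ be the matrix with zero diagonal and $(d_\alpha)_{ij}=(d_\alpha)_{ji}=d_{ij}$ for $1\le i<j\le k$, and let $\mathcal{K}^\dagger d_\alpha:=-\tfrac12 J_k d_\alpha J_k$ where $J_k=I_k-\tfrac1k ee^T$ (this matrix lies in $\mathcal{S}^k_{c,+}$). Then for any matrix $\widehat Y\in\mathcal{S}^k$ exposing $\operatorname{face}(\mathcal{K}^\dagger d_\alpha;\mathcal{S}^k_{c,+})$, the $n\times n$ matrix $\begin{bmatrix}\widehat Y&0\\0&0\end{bmatrix}$ exposes $\operatorname{face}(\widehat\Omega;\mathcal{S}^n_{c,+})$.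
   Context: $G=(V,E,d)$: weighted undirected graph, $V=\{1,\dots,n\}$, $E\subseteq\{ij:1\le i<j\le n\}$, $d\in\mathbb{R}^E$ nonnegative. $\mathcal{S}^m$ is the space of real symmetric $m\times m$ matrices with trace inner product $\langle A,B\rangle=\operatorname{tr}(AB)$; $e$ is the all-ones vector of appropriate size. $\mathcal{K}:\mathcal{S}^n\to\mathcal{S}^n$ is defined by $\mathcal{K}(X)_{ij}=X_{ii}+X_{jj}-2X_{ij}$. $\mathcal{S}^m_{c,+}=\{X\in\mathcal{S}^m: X\succeq 0,\ Xe=0\}$ (centered PSD matrices). A face of $\mathcal{S}^m_{c,+}$ is a convex subset $F$ such that any line segment in $\mathcal{S}^m_{c,+}$ whose relative interior meets $F$ lies in $F$. For a convex set $\Omega\subseteq\mathcal{S}^m_{c,+}$ (or a single matrix), $\operatorname{face}(\Omega;\mathcal{S}^m_{c,+})$ is the smallest face of $\mathcal{S}^m_{c,+}$ containing $\Omega$. A matrix $Y$ exposes a face $F$ of $\mathcal{S}^m_{c,+}$ if $Y\succeq 0$, $Ye=0$, and $F=\{X\in\mathcal{S}^m_{c,+}:\langle X,Y\rangle=0\}$. *)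

(* Defs.v *)
From HB Require Import structures.
From mathcomp Require Import all_boot all_order all_algebra.
Set Implicit Arguments. Unset Strict Implicit. Unset Printing Implicit Defensive.
Import Order.TTheory GRing.Theory Num.Theory.
Local Open Scope ring_scope.

Section Defs.
Variable R : rcfType.

Definition symmx n (X : 'M[R]_n) : Prop := X^T = X.
Definition psd n (X : 'M[R]_n) : Prop :=
  symmx X /\ forall v : 'cV[R]_n, 0 <= (v^T *m X *m v) 0 0.

Definition centered n (X : 'M[R]_n) : Prop := X *m (const_mx 1 : 'cV[R]_n) = 0.

Definition Scp n (X : 'M[R]_n) : Prop := psd X /\ centered X.

Definition is_face n (F : 'M[R]_n -> Prop) : Prop :=
  (forall X, F X -> Scp X) /\
  (forall A B (t : R), F A -> F B -> 0 <= t <= 1 -> F ((1 - t) *: A + t *: B)) /\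
  (forall A B (t : R), Scp A -> Scp B -> 0 < t < 1 ->
      F ((1 - t) *: A + t *: B) -> F A /\ F B).

Definition face_of n (Om : 'M[R]_n -> Prop) : 'M[R]_n -> Prop :=
  fun X => forall F, is_face F -> (forall Z, Om Z -> F Z) -> F X.

Definition exposes n (Y : 'M[R]_n) (F : 'M[R]_n -> Prop) : Prop :=
  psd Y /\ centered Y /\ forall X, F X <-> (Scp X /\ \tr (X *m Y) = 0).

Definition Kop n (X : 'M[R]_n) : 'M[R]_n :=
  \matrix_(i, j) (X i i + X j j - 2 * X i j).

Definition Jmx k : 'M[R]_k := 1%:M - (k%:R)^-1 *: const_mx 1.
Definition Kdag k (D : 'M[R]_k) : 'M[R]_k := - (2^-1) *: (Jmx k *m D *m Jmx k).

(* d_alpha : the k x k zero-diagonal symmetric matrix built from d on the clique,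
   vertices of alpha being the first k vertices of 'I_(k+m) *)
Definition d_alpha k m (d : 'I_(k + m) -> 'I_(k + m) -> R) : 'M[R]_k :=
  \matrix_(i, j) (if (i < j)%N then d (lshift m i) (lshift m j)
                  else if (j < i)%N then d (lshift m j) (lshift m i) else 0).

Definition Omega_hat k m (d : 'I_(k + m) -> 'I_(k + m) -> R) (X : 'M[R]_(k + m)) : Prop :=
  Scp X /\ forall i j : 'I_(k + m), (i < j)%N -> (j < k)%N -> Kop X i j = d i j.

End Defs.

(* Main.v *)
Require Import Defs.
From HB Require Import structures.
From mathcomp Require Import all_boot all_order all_algebra.
From mathcomp Require Import ring lra.
Import Order.TTheory GRing.Theory Num.Theory.
Local Open Scope ring_scope.

Section Aux.
Variable R : rcfType.

Lemma psdD n (A B : 'M[R]_n) : psd A -> psd B -> psd (A + B).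
Proof.
move=> [sA pA] [sB pB]; split.
  by rewrite /symmx linearD /= sA sB.
move=> v; rewrite mulmxDr mulmxDl mxE; exact: addr_ge0.
Qed.

Lemma psdZ n (A : 'M[R]_n) a : 0 <= a -> psd A -> psd (a *: A).
Proof.
move=> a0 [sA pA]; split.
  by rewrite /symmx linearZ /= sA.
move=> v; rewrite -scalemxAr -scalemxAl mxE; exact: mulr_ge0.
Qed.

Lemma psd0 n : psd (0 : 'M[R]_n).
Proof. split; first by rewrite /symmx trmx0. by move=> v; rewrite mulmx0 mul0mx mxE. Qed.

Lemma centeredD n (A B : 'M[R]_n) : centered A -> centered B -> centered (A + B).
Proof. by rewrite /centered mulmxDl => -> ->; rewrite addr0. Qed.

Lemma centeredZ n (A : 'M[R]_n) a : centered A -> centered (a *: A).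
Proof. by rewrite /centered -scalemxAl => ->; rewrite scaler0. Qed.

Lemma ScpD n (A B : 'M[R]_n) : Scp A -> Scp B -> Scp (A + B).
Proof. by move=> [? ?] [? ?]; split; [apply: psdD|apply: centeredD]. Qed.

Lemma ScpZ n (A : 'M[R]_n) a : 0 <= a -> Scp A -> Scp (a *: A).
Proof. by move=> a0 [? ?]; split; [apply: psdZ|apply: centeredZ]. Qed.

Lemma Scp0 n : Scp (0 : 'M[R]_n).
Proof. split; first exact: psd0. by rewrite /centered mul0mx. Qed.

Lemma Scp_comb n (A B : 'M[R]_n) (t : R) : Scp A -> Scp B -> 0 <= t <= 1 ->
  Scp ((1 - t) *: A + t *: B).
Proof.
move=> hA hB /andP[t0 t1]; apply: ScpD; apply: ScpZ => //.
by rewrite subr_ge0.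
Qed.

Lemma Scp_face n : is_face (@Scp R n).
Proof.
split => //; split.
  by move=> A B t hA hB ht; apply: Scp_comb.
by move=> A B t hA hB.
Qed.

Lemma face_of_face n (Om : 'M[R]_n -> Prop) : (forall Z, Om Z -> Scp Z) ->
  is_face (face_of Om).
Proof.
move=> hOm; split.
  by move=> X hX; apply: hX => //; exact: Scp_face.
split.
  move=> A B t hA hB ht F hF hFO.
  by case: (hF) => _ [hc _]; apply: hc; [apply: hA|apply: hB|exact: ht].
move=> A B t hA hB ht hC.
have H : forall F, is_face F -> (forall Z, Om Z -> F Z) -> F A /\ F B.
  move=> F hF hFO; case: (hF) => _ [_ he].
  exact: (he A B t hA hB ht (hC F hF hFO)).
by split => F hF hFO; case: (H F hF hFO).
Qed.

Lemma dominate n (F : 'M[R]_n -> Prop) (A X : 'M[R]_n) (e : R) :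
  is_face F -> F A -> Scp X -> 0 < e -> Scp (A - e *: X) -> F X.
Proof.
move=> [_ [_ hF]] FA hX e0 hAX.
pose d := Order.min e (2^-1).
have d0 : 0 < d by rewrite lt_min e0 invr_gt0 ltr0n.
have d1 : d < 1.
  have : d <= 2^-1 by rewrite ge_min lexx orbT.
  move=> h; apply: (le_lt_trans h); rewrite invf_lt1 ?ltr0n //.
  by rewrite ltr1n.
have de : d <= e by rewrite ge_min lexx.
have hAd : Scp (A - d *: X).
  have -> : A - d *: X = (A - e *: X) + (e - d) *: X.
    by apply/matrixP => i j; rewrite !mxE; ring.
  by apply: ScpD => //; apply: ScpZ => //; rewrite subr_ge0.
have d1' : 1 - d != 0 by rewrite subr_eq0 eq_sym lt_eqF.
have := hF ((1 - d)^-1 *: (A - d *: X)) X d.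
rewrite scalerA mulfV // scale1r subrK.
move=> h; case: h => //.
  by apply: ScpZ => //; rewrite invr_ge0 subr_ge0 ltW.
  by rewrite d0 d1.
Qed.
End Aux.


Section Aux2.
Variable R : rcfType.

Lemma constM p q r : (const_mx 1 : 'M[R]_(p,q)) *m (const_mx 1 : 'M_(q,r)) = q%:R *: const_mx 1.
Proof.
apply/matrixP => i j; rewrite !mxE.
under eq_bigr do rewrite !mxE mulr1.
by rewrite sumr_const card_ord mulr1.
Qed.

Lemma J_tr k : (Jmx R k)^T = Jmx R k.
Proof. by rewrite /Jmx linearB linearZ /= trmx1 trmx_const. Qed.

Lemma J_e k : Jmx R k *m (const_mx 1 : 'cV_k) = 0.
Proof.
case: k => [|k]; first by rewrite flatmx0.
rewrite /Jmx mulmxBl mul1mx -scalemxAl constM scalerA mulVf ?scale1r ?subrr //.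
by rewrite pnatr_eq0.
Qed.

Lemma eT_J k : (const_mx 1 : 'rV_k) *m Jmx R k = 0.
Proof.
case: k => [|k]; first by rewrite thinmx0.
rewrite /Jmx mulmxBr mulmx1 -scalemxAr constM scalerA mulVf ?scale1r ?subrr //.
by rewrite pnatr_eq0.
Qed.

Lemma cent_J k (Y : 'M[R]_k) : symmx Y -> centered Y -> Y *m Jmx R k = Y /\ Jmx R k *m Y = Y.
Proof.
move=> sY cY.
have h1 : Y *m Jmx R k = Y.
  rewrite /Jmx mulmxBr mulmx1 -scalemxAr.
  have -> : (const_mx 1 : 'M[R]_k) = (const_mx 1 : 'cV_k) *m (const_mx 1 : 'rV_k).
    by rewrite constM scale1r.
  by rewrite mulmxA cY mul0mx scaler0 subr0.
split => //.
apply: trmx_inj; rewrite trmx_mul J_tr sY; exact: h1.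
Qed.

Lemma JMJ_E k (M : 'M[R]_k) i j :
  (Jmx R k *m M *m Jmx R k) i j =
  M i j - k%:R^-1 * (\sum_l M l j) - k%:R^-1 * (\sum_l M i l)
  + k%:R^-1 * k%:R^-1 * (\sum_l \sum_l' M l l').
Proof.
set c := k%:R^-1.
have -> : Jmx R k *m M *m Jmx R k =
  M - c *: (const_mx 1 *m M) - c *: (M *m const_mx 1) + (c * c) *: (const_mx 1 *m M *m const_mx 1).
  rewrite /Jmx mulmxBl mul1mx mulmxBr mulmxBl mulmx1 -!scalemxAl -!scalemxAr.
  rewrite mulmx1 mulmxBl -scalemxAl.
  set A := const_mx 1 *m M; set B := M *m const_mx 1; set C := A *m const_mx 1.
  by apply/matrixP => a b; rewrite !mxE /c; ring.
rewrite !mxE; congr (_ - c * _ - c * _ + c * c * _).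
- by apply: eq_bigr => l _; rewrite mxE mul1r.
- by apply: eq_bigr => l _; rewrite mxE mulr1.
- under eq_bigr do rewrite mxE mxE mulr1.
  rewrite exchange_big /=; apply: eq_bigr => l _.
  by apply: eq_bigr => l' _; rewrite mxE mul1r.
Qed.

Lemma Kop_JYJ k (Y : 'M[R]_k) : symmx Y -> Kop (Jmx R k *m Y *m Jmx R k) = Kop Y.
Proof.
move=> sY; apply/matrixP => i j; rewrite /Kop mxE [RHS]mxE !JMJ_E.
have hs : forall a, \sum_l Y l a = \sum_l Y a l.
  by move=> a; apply: eq_bigr => l _; rewrite -{1}sY mxE.
rewrite !hs; ring.
Qed.

Lemma Kop_form k (Y : 'M[R]_k) : Kop Y =
  (\col_i Y i i) *m const_mx 1 + const_mx 1 *m (\col_i Y i i)^T - 2 *: Y.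
Proof.
apply/matrixP => i j; rewrite !mxE !big_ord1 !mxE; ring.
Qed.

Lemma KdagE k (M : 'M[R]_k) : Kdag M = - (2^-1) *: (Jmx R k *m M *m Jmx R k).
Proof. by []. Qed.

Lemma Kdag_Kop k (Y : 'M[R]_k) : Kdag (Kop Y) = Jmx R k *m Y *m Jmx R k.
Proof.
rewrite KdagE Kop_form.
move: (J_e k) (eT_J k); move: (Jmx R k) => J hJe heJ.
set u := \col_i Y i i.
rewrite mulmxBr mulmxDr mulmxBl mulmxDl.
rewrite (mulmxA J u) -(mulmxA (J *m u)) heJ mulmx0 add0r.
rewrite (mulmxA J (const_mx 1)) hJe !mul0mx sub0r.
rewrite -scalemxAr -scalemxAl scalerN scalerA.
by rewrite mulNr mulVf ?scaleN1r ?opprK // pnatr_eq0.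
Qed.
End Aux2.


Section Aux3.
Variable R : rcfType.
Variables k m : nat.

Definition phi (X : 'M[R]_(k + m)) : 'M[R]_k := Jmx R k *m ulsubmx X *m Jmx R k.

Lemma shrink n (D A : 'M[R]_n) e e' : Scp (D - e *: A) -> Scp A -> 0 <= e' <= e ->
  Scp (D - e' *: A).
Proof.
move=> h hA /andP[_ h']. 
have -> : D - e' *: A = (D - e *: A) + (e - e') *: A.
  by apply/matrixP => i j; rewrite !mxE; ring.
by apply: ScpD => //; apply: ScpZ => //; rewrite subr_ge0.
Qed.

Lemma psd_ul (X : 'M[R]_(k + m)) : psd X -> psd (ulsubmx X).
Proof.
move=> [sX pX]; split.
  by rewrite /symmx trmx_ulsub sX.
move=> v; have := pX (col_mx v 0).
rewrite -{1}(submxK X) tr_col_mx trmx0 mul_row_block mul_row_col.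
by rewrite !mul0mx !addr0 mulmx0 addr0.
Qed.

Lemma Scp_JYJ (Y : 'M[R]_k) : psd Y -> Scp (Jmx R k *m Y *m Jmx R k).
Proof.
move=> [sY pY]; split; first split.
- by rewrite /symmx !trmx_mul J_tr sY mulmxA.
- move=> v; have := pY (Jmx R k *m v).
  by rewrite trmx_mul J_tr !mulmxA.
- by rewrite /centered -mulmxA J_e mulmx0.
Qed.

Lemma Scp_phi (X : 'M[R]_(k + m)) : psd X -> Scp (phi X).
Proof. by move=> h; apply: Scp_JYJ; apply: psd_ul. Qed.

Lemma Scp_blk (W : 'M[R]_k) : Scp W -> Scp (block_mx W 0 0 (0 : 'M_m)).
Proof.
move=> [[sW pW] cW]; split; first split.
- by rewrite /symmx tr_block_mx sW !trmx0.
- move=> v; rewrite -(vsubmxK v) tr_col_mx mul_row_block mul_row_col.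
  by rewrite !mulmx0 !addr0 mul0mx addr0.
- by rewrite /centered -col_mx_const mul_block_col cW !mul0mx !addr0 col_mx0.
Qed.

Lemma phi_lin a b (A B : 'M[R]_(k + m)) : phi (a *: A + b *: B) = a *: phi A + b *: phi B.
Proof.
rewrite /phi.
have -> : ulsubmx (a *: A + b *: B) = a *: ulsubmx A + b *: ulsubmx B.
  by apply/matrixP => i j; rewrite !mxE.
by move: (Jmx R k) => J; rewrite mulmxDr mulmxDl -!scalemxAr -!scalemxAl.
Qed.

Lemma phi_blk (W : 'M[R]_k) : Scp W -> phi (block_mx W 0 0 (0 : 'M_m)) = W.
Proof.
move=> [[sW _] cW]; rewrite /phi block_mxKul.
by case: (@cent_J R k W sW cW) => h1 h2; rewrite h2 h1.
Qed.

Lemma tr_blk (X : 'M[R]_(k + m)) (Y : 'M[R]_k) : symmx Y -> centered Y ->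
  \tr (X *m block_mx Y 0 0 (0 : 'M_m)) = \tr (phi X *m Y).
Proof.
move=> sY cY; case: (@cent_J R k Y sY cY) => h1 h2.
rewrite -{1}(submxK X) mulmx_block mxtrace_block !mulmx0 !addr0 mxtrace0 addr0.
rewrite /phi; move: h1 h2; move: (Jmx R k) (ulsubmx X) => J U h1 h2.
by rewrite -[J *m U *m J *m Y]mulmxA h2 -[J *m U *m Y]mulmxA [in RHS]mxtrace_mulC -[U *m Y *m J]mulmxA h1.
Qed.
End Aux3.
Arguments phi {R k m}.


Section Aux4.
Variable R : rcfType.
Variables k m : nat.

Lemma Om_dalpha (d : 'I_(k + m) -> 'I_(k + m) -> R) X :
  Omega_hat d X -> d_alpha d = Kop (ulsubmx X).
Proof.
move=> [[[sX _] _] hK]; apply/matrixP => i j; rewrite !mxE.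
case: ltngtP => hij.
- by rewrite -hK //= ?ltn_ord // !mxE.
- rewrite -hK //= ?ltn_ord // !mxE.
  have s : forall a b, X a b = X b a by move=> a b; rewrite -{1}sX mxE.
  rewrite (s (lshift m j) (lshift m i)); ring.
- have -> : i = j by apply: val_inj.
  ring.
Qed.

Lemma Om_phi (d : 'I_(k + m) -> 'I_(k + m) -> R) X :
  Omega_hat d X -> Kdag (d_alpha d) = phi X.
Proof. by move=> h; rewrite (@Om_dalpha d X h) Kdag_Kop. Qed.

Lemma Om_intro (d : 'I_(k + m) -> 'I_(k + m) -> R) X0 A :
  Omega_hat d X0 -> Scp A -> phi A = phi X0 -> Omega_hat d A.
Proof.
move=> h0 hA hphi; split => // i j hij hjk.
have sym : forall Z : 'M[R]_(k + m), Scp Z -> symmx (ulsubmx Z).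
  by move=> Z [[sZ _] _]; rewrite /symmx trmx_ulsub sZ.
have hK : Kop (ulsubmx A) = Kop (ulsubmx X0).
  by rewrite -(@Kop_JYJ R k _ (sym A hA)) -(@Kop_JYJ R k _ (sym X0 h0.1)); congr Kop.
have hik : (i < k)%N by apply: ltn_trans hjk.
have -> : i = lshift m (Ordinal hik) by apply: val_inj.
have -> : j = lshift m (Ordinal hjk) by apply: val_inj.
have := congr1 (fun M : 'M[R]_k => M (Ordinal hik) (Ordinal hjk)) hK.
rewrite /= !mxE => ->.
have := h0.2 (lshift m (Ordinal hik)) (lshift m (Ordinal hjk)) hij hjk.
by rewrite !mxE.
Qed.
End Aux4.


Theorem theorem3p1 (R : rcfType) (k m : nat)
  (E : 'I_(k + m) -> 'I_(k + m) -> bool) (d : 'I_(k + m) -> 'I_(k + m) -> R)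
  (hE : forall i j, E i j -> (i < j)%N)
  (hd : forall i j, E i j -> 0 <= d i j)
  (hclique : forall i j : 'I_(k + m), (i < j)%N -> (j < k)%N -> E i j)
  (hne : exists X, Omega_hat d X)
  (Yhat : 'M[R]_k)
  (hY : exposes Yhat (face_of (fun Z => Z = Kdag (d_alpha d)))) :
  exposes (block_mx Yhat 0 0 (0 : 'M[R]_m)) (face_of (Omega_hat d)).
Proof.
case: hY => pY [cY hYf].
case: hne => X0 hX0.
set D := Kdag (d_alpha d) in hYf *.
have hD : D = phi X0 := Om_phi _ _ _ _ _ hX0.
have DS : Scp D by rewrite hD; apply: Scp_phi; case: hX0 => [[]].
set FD := face_of (fun Z : 'M[R]_k => Z = D) in hYf *.
have FDf : is_face FD by apply: face_of_face => Z ->.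
have htr : forall X, \tr (X *m block_mx Yhat 0 0 (0 : 'M_m)) = \tr (phi X *m Yhat).
  by move=> X; apply: tr_blk; [exact: pY.1 | exact: cY].
have hBS : Scp (block_mx Yhat 0 0 (0 : 'M_m)) by apply: Scp_blk.
split; first exact: hBS.1.
split; first exact: hBS.2.
move=> X; split.
- move=> hX.
  pose G := fun X : 'M[R]_(k + m) => Scp X /\ FD (phi X).
  have Gf : is_face G.
    split; first by move=> ? [].
    split.
    + move=> A B t [sA fA] [sB fB] ht; split; first exact: Scp_comb.
      rewrite phi_lin; case: FDf => _ [hc _]; exact: hc.
    + move=> A B t sA sB ht [_ fC]; rewrite phi_lin in fC.
      case: FDf => _ [_ he].
      case: (he _ _ _ (Scp_phi _ _ _ _ sA.1) (Scp_phi _ _ _ _ sB.1) ht fC) => fA fB.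
      by split; split.
  have OG : forall Z, Omega_hat d Z -> G Z.
    move=> Z hZ; split; first exact: hZ.1.
    rewrite -(Om_phi _ _ _ _ _ hZ) -/D => F hF hO; exact: hO.
  case: (hX G Gf OG) => sX fX.
  by split => //; rewrite htr; case: (hYf (phi X)) => h _; case: (h fX).
- move=> [sX hXt].
  have fX : FD (phi X).
    by apply/hYf; split; [apply: Scp_phi; exact: sX.1 | rewrite -htr].
  pose F2 := fun Z : 'M[R]_k => Scp Z /\ exists e, 0 < e /\ Scp (D - e *: Z).
  have F2f : is_face F2.
    split; first by move=> ? [].
    split.
    + move=> A B t [sA [eA [eA0 hA]]] [sB [eB [eB0 hB]]] ht.
      split; first exact: Scp_comb.
      exists (Order.min eA eB); split; first by rewrite lt_min eA0.
      set e := Order.min eA eB.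
      have -> : D - e *: ((1 - t) *: A + t *: B) = (1 - t) *: (D - e *: A) + t *: (D - e *: B).
        by apply/matrixP => i j; rewrite !mxE; ring.
      have e0 : 0 <= e by rewrite le_min !ltW.
      apply: Scp_comb => //.
        by apply: (shrink _ _ _ _ _ _ hA sA); rewrite e0 ge_min lexx.
      by apply: (shrink _ _ _ _ _ _ hB sB); rewrite e0 ge_min lexx orbT.
    + move=> A B t sA sB /andP[t0 t1] [_ [e [e0 hC]]]; split.
      * split => //; exists (e * (1 - t)); split; first by rewrite mulr_gt0 // subr_gt0.
        have -> : D - (e * (1 - t)) *: A = (D - e *: ((1 - t) *: A + t *: B)) + (e * t) *: B.
          by apply/matrixP => i j; rewrite !mxE; ring.
        by apply: ScpD => //; apply: ScpZ => //; rewrite mulr_ge0 // ltW.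
      * split => //; exists (e * t); split; first by rewrite mulr_gt0.
        have -> : D - (e * t) *: B = (D - e *: ((1 - t) *: A + t *: B)) + (e * (1 - t)) *: A.
          by apply/matrixP => i j; rewrite !mxE; ring.
        by apply: ScpD => //; apply: ScpZ => //; rewrite mulr_ge0 ?ltW // subr_gt0.
  have F2D : forall Z, Z = D -> F2 Z.
    move=> Z ->; split => //; exists 1; split => //.
    by rewrite scale1r subrr; exact: Scp0.
  case: (fX F2 F2f F2D) => _ [e [e0 hW]].
  move=> F hF hO.
  set W := D - e *: phi X in hW.
  pose A := block_mx W 0 0 (0 : 'M_m) + e *: X.
  have AS : Scp A.
    by apply: ScpD; [apply: Scp_blk | apply: ScpZ => //; exact: ltW].
  have phiA : phi A = phi X0.
    rewrite -hD /A -(scale1r (block_mx W _ _ _)) phi_lin scale1r phi_blk //.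
    by rewrite /W subrK.
  have OA : Omega_hat d A := Om_intro _ _ _ _ _ _ hX0 AS phiA.
  apply: (dominate _ _ _ _ _ _ hF (hO _ OA) sX e0).
  by rewrite /A addrK; apply: Scp_blk.
Qed.
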